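(* Let $G$ be a finite graph, $k$ a positive integer, $uv\in E(G)$, and $c$ a $k$-colouring of $G$ such that some colour $i\in\{1,\dots,k\}$ does not appear under $c$ on the closed neighbourhood of $u$ nor on the closed neighbourhood of $v$. Then there exist a $k$-colouring $c_u$ differing from $c$ exactly at $u$ and a $k$-colouring $c_v$ differing from $c$ exactly at $v$ such that $c_u$ and $c_v$ have no common neighbour in $\mathcal{C}_k(G)$ other than $c$.
   Context: A $k$-colouring of $G$ is a map $c:V(G)\to\{1,\dots,k\}$ with $c(x)\neq c(y)$ for every edge $xy$. The $k$-recolouring graph $\mathcal{C}_k(G)$ has as vertices all $k$-colourings of $G$, two colourings being adjacent iff they differ at exactly one vertex of $G$. *)

(* Defs.v *)
From mathcomp Require Import all_boot.
Set Implicit Arguments. Unset Strict Implicit. Unset Printing Implicit Defensive.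

(* A finite simple graph: vertex type T : finType with a symmetric,
   irreflexive adjacency relation e. Colours {1..k} are represented by 'I_k. *)
Definition simple_graph (T : finType) (e : rel T) : Prop :=
  symmetric e /\ irreflexive e.

Definition is_colouring (T : finType) (e : rel T) (k : nat) (c : T -> 'I_k) : Prop :=
  forall x y, e x y -> c x != c y.

Definition differ_exactly_at (T : finType) (k : nat) (c d : {ffun T -> 'I_k}) (x : T) : Prop :=
  c x != d x /\ forall y, y != x -> c y = d y.

Definition recol_adj (T : finType) (k : nat) (c d : {ffun T -> 'I_k}) : Prop :=
  exists x, differ_exactly_at c d x.

Definition closed_nbhd (T : finType) (e : rel T) (x : T) : pred T :=
  fun y => (y == x) || e x y.

(* Main.v *)
Require Import Defs.
From mathcomp Require Import all_boot.

Theorem lemma2p3 (T : finType) (e : rel T) (k : nat) (u v : T)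
    (c : {ffun T -> 'I_k}) :
  simple_graph e -> 0 < k -> e u v -> is_colouring e c ->
  (exists i : 'I_k, forall w, (w \in closed_nbhd e u) || (w \in closed_nbhd e v) -> c w != i) ->
  exists cu cv : {ffun T -> 'I_k},
    [/\ is_colouring e cu, differ_exactly_at cu c u,
        is_colouring e cv, differ_exactly_at cv c v &
        forall d : {ffun T -> 'I_k}, is_colouring e d ->
          recol_adj d cu -> recol_adj d cv -> d = c].
Proof.
move=> [esym eirr] _ euv cc [i Hi].
have Nu : forall w, w \in closed_nbhd e u -> c w != i.
  by move=> w H; apply: Hi; rewrite H.
have Nv : forall w, w \in closed_nbhd e v -> c w != i.
  by move=> w H; apply: Hi; rewrite H orbT.
have inN : forall x w, (w \in closed_nbhd e x) = (w == x) || e x w by [].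
have uv : u != v by apply/eqP => E; move: euv; rewrite E eirr.
have recolor : forall x, (forall w, w \in closed_nbhd e x -> c w != i) ->
   is_colouring e [ffun w => if w == x then i else c w] /\
   differ_exactly_at [ffun w => if w == x then i else c w] c x.
  move=> x Nx; split.
    move=> a b eab; rewrite !ffunE.
    case: ifP => [/eqP ax|ax]; case: ifP => [/eqP bx|bx].
    - by move: eab; rewrite ax bx eirr.
    - by rewrite eq_sym; apply: Nx; rewrite inN -ax eab orbT.
    - by apply: Nx; rewrite inN -bx esym eab orbT.
    - exact: cc.
  split; first by rewrite ffunE eqxx eq_sym; apply: Nx; rewrite inN eqxx.
  by move=> y /negbTE yx; rewrite ffunE yx.
have [cuC cuD] := recolor u Nu.
have [cvC cvD] := recolor v Nv.
exists [ffun w => if w == u then i else c w], [ffun w => if w == v then i else c w].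
split=> // d dC [x [dx1 dx2]] [y [dy1 dy2]].
move: dx1 dy1; rewrite !ffunE => dx1 dy1.
have {}dx2 : forall w, w != x -> d w = if w == u then i else c w.
  by move=> w /dx2 ->; rewrite ffunE.
have {}dy2 : forall w, w != y -> d w = if w == v then i else c w.
  by move=> w /dy2 ->; rewrite ffunE.
have cui : c u != i by apply: Nu; rewrite inN eqxx.
have cvi : c v != i by apply: Nv; rewrite inN eqxx.
have xu_or : (x == u) || (y == u).
  case: (boolP (x == u)) => // xu; case: (boolP (y == u)) => // yu; exfalso.
  rewrite eq_sym in xu; rewrite eq_sym in yu.
  have E1 := dx2 u xu; have E2 := dy2 u yu.
  rewrite eqxx in E1; rewrite (negbTE uv) in E2.
  by move: cui; rewrite -E2 E1 eqxx.
have xv_or : (x == v) || (y == v).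
  case: (boolP (x == v)) => // xv; case: (boolP (y == v)) => // yv; exfalso.
  rewrite eq_sym in xv; rewrite eq_sym in yv.
  have E1 := dy2 v yv; have E2 := dx2 v xv.
  rewrite eqxx in E1; rewrite eq_sym (negbTE uv) in E2.
  by move: cvi; rewrite -E2 E1 eqxx.
case/orP: xu_or => [/eqP xu | /eqP yu].
- subst x.
  have yv : y = v by case/orP: xv_or => /eqP // E; move: uv; rewrite E eqxx.
  subst y.
  apply/ffunP => w.
  case: (eqVneq w u) => [->|wu].
    by have := dy2 u uv; rewrite (negbTE uv).
  by have := dx2 w wu; rewrite (negbTE wu).
- subst y.
  have xv : x = v by case/orP: xv_or => /eqP // E; move: uv; rewrite E eqxx.
  subst x.
  have := dx2 u uv; rewrite eqxx => du.
  have := dy2 v; rewrite eq_sym uv eqxx => /(_ isT) dv.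
  by have := dC u v euv; rewrite du dv eqxx.
Qed.
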